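(* Let $\mathsf{Ch}_3=\langle a,b,c\rangle$. Define $2\times2$ tropical matrices (writing $-$ for $-\infty$): $\rho_1$: $a\mapsto\begin{pmatrix}1&0\\-&0\end{pmatrix}$, $b\mapsto\begin{pmatrix}0&0\\-&1\end{pmatrix}$, $c\mapsto\begin{pmatrix}0&0\\-&1\end{pmatrix}$; $\rho_2$: $a\mapsto\begin{pmatrix}1&0\\-&0\end{pmatrix}$, $b\mapsto\begin{pmatrix}1&0\\-&0\end{pmatrix}$, $c\mapsto\begin{pmatrix}0&0\\-&1\end{pmatrix}$; $\rho_3$: $a\mapsto\begin{pmatrix}1&1\\-&0\end{pmatrix}$, $b\mapsto\begin{pmatrix}0&0\\-&0\end{pmatrix}$, $c\mapsto\begin{pmatrix}0&1\\-&1\end{pmatrix}$. Then the map $\rho=(\rho_1,\rho_2,\rho_3):\mathsf{Ch}_3\to(\mathcal M_2(\mathbb T))^3$, sending a word in $a,b,c$ to the corresponding products of these matrices (and the identity of $\mathsf{Ch}_3$ to the triple $(I_1,I_2,I_3)$ with $I_1=I_2=\begin{pmatrix}0&-1\\-&0\end{pmatrix}$, $I_3=\begin{pmatrix}0&0\\-&0\end{pmatrix}$, each of which acts as a two-sided identity on the semigroup generated by the corresponding generator images), is a well-defined injective semigroup homomorphism.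
   Context: The Chinese monoid $\mathsf{Ch}_3=\langle a,b,c\rangle$ (with $a=a_1,b=a_2,c=a_3$) is presented by the relations $a_ja_ka_i=a_ka_ja_i=a_ka_ia_j$ for all $1\le i\le j\le k\le 3$. $\mathbb T=\mathbb R\cup\{-\infty\}$ is the max-plus semiring (addition $\max$, multiplication ordinary $+$), and $\mathcal M_2(\mathbb T)$ is the monoid of $2\times2$ matrices over $\mathbb T$ with product $(AB)_{ij}=\max_k(A_{ik}+B_{kj})$; $(\mathcal M_2(\mathbb T))^3$ has componentwise product. *)

(* Defs.v *)
From HB Require Import structures.
From mathcomp Require Import all_boot all_order all_algebra.
From mathcomp Require Import reals.
Set Implicit Arguments. Unset Strict Implicit. Unset Printing Implicit Defensive.
Import Order.TTheory GRing.Theory Num.Theory.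
Local Open Scope ring_scope.

(* Generators a = a_1, b = a_2, c = a_3 are encoded as the ordinals 0,1,2 : 'I_3;
   words are sequences of generators (the free monoid); Ch_3 is the quotient of
   the free monoid by the congruence [chcong] generated by the defining relations
   a_j a_k a_i = a_k a_j a_i = a_k a_i a_j  for all i <= j <= k. *)
Definition word := seq 'I_3.

Definition ch_rel (x y : word) : Prop :=
  exists (i j k : 'I_3), (i <= j)%N /\ (j <= k)%N /\
    let w1 := [:: j; k; i] in let w2 := [:: k; j; i] in let w3 := [:: k; i; j] in
    (x = w1 \/ x = w2 \/ x = w3) /\ (y = w1 \/ y = w2 \/ y = w3).

Inductive chcong : word -> word -> Prop :=
  | chcong_step p q x y : ch_rel x y -> chcong (p ++ x ++ q) (p ++ y ++ q)
  | chcong_refl u : chcong u u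
  | chcong_sym u v : chcong u v -> chcong v u
  | chcong_trans u v w : chcong u v -> chcong v w -> chcong u w.

(* None stands for -oo. *)
Definition trop (R : realType) := option R.

Definition tadd (R : realType) (x y : trop R) : trop R :=
  match x, y with
  | None, _ => y
  | _, None => x
  | Some a, Some b => Some (Num.max a b)
  end.

Definition tmul (R : realType) (x y : trop R) : trop R :=
  match x, y with
  | Some a, Some b => Some (a + b)
  | _, _ => None
  end.

Definition tmx (R : realType) := 'M[trop R]_2.

Definition tmxmul (R : realType) (A B : tmx R) : tmx R :=
  \matrix_(i < 2, j < 2)
    tadd (tmul (A i ord0) (B ord0 j)) (tmul (A i ord_max) (B ord_max j)).

Definition mx2 (R : realType) (x y z t : trop R) : tmx R :=
  \matrix_(i < 2, j < 2)
    if i == ord0 then (if j == ord0 then x else y) else (if j == ord0 then z else t).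

Definition T0 (R : realType) : trop R := Some 0.
Definition T1 (R : realType) : trop R := Some 1.
Definition Tm1 (R : realType) : trop R := Some (-1).
Definition Tinf (R : realType) : trop R := None.

(* image of generator g under rho_r (r = 0,1,2 for rho_1, rho_2, rho_3) *)
Definition genmx (R : realType) (r g : 'I_3) : tmx R :=
  match nat_of_ord r, nat_of_ord g with
  | 0, 0 => mx2 (T1 R) (T0 R) (Tinf R) (T0 R)
  | 0, 1 => mx2 (T0 R) (T0 R) (Tinf R) (T1 R)
  | 0, _ => mx2 (T0 R) (T0 R) (Tinf R) (T1 R)
  | 1, 0 => mx2 (T1 R) (T0 R) (Tinf R) (T0 R)
  | 1, 1 => mx2 (T1 R) (T0 R) (Tinf R) (T0 R)
  | 1, _ => mx2 (T0 R) (T0 R) (Tinf R) (T1 R)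
  | _, 0 => mx2 (T1 R) (T1 R) (Tinf R) (T0 R)
  | _, 1 => mx2 (T0 R) (T0 R) (Tinf R) (T0 R)
  | _, _ => mx2 (T0 R) (T1 R) (Tinf R) (T1 R)
  end.

Definition idmx (R : realType) (r : 'I_3) : tmx R :=
  match nat_of_ord r with
  | 0 | 1 => mx2 (T0 R) (Tm1 R) (Tinf R) (T0 R)
  | _ => mx2 (T0 R) (T0 R) (Tinf R) (T0 R)
  end.

Fixpoint rho_ne (R : realType) (r : 'I_3) (g : 'I_3) (w : word) : tmx R :=
  match w with
  | [::] => genmx R r g
  | h :: w' => tmxmul (genmx R r g) (rho_ne R r h w')
  end.

Definition rho_r (R : realType) (r : 'I_3) (w : word) : tmx R :=
  match w with
  | [::] => idmx R r
  | g :: w' => rho_ne R r g w'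
  end.

Definition rho (R : realType) (w : word) : tmx R * tmx R * tmx R :=
  (rho_r R 0 w, rho_r R 1 w, rho_r R 2 w).

Definition tmx3mul (R : realType) (X Y : tmx R * tmx R * tmx R) : tmx R * tmx R * tmx R :=
  (tmxmul X.1.1 Y.1.1, tmxmul X.1.2 Y.1.2, tmxmul X.2 Y.2).

(* Main.v *)
Require Import Defs.
From Stdlib Require Import Setoid Morphisms.
From mathcomp Require Import all_boot all_order all_algebra.
From mathcomp Require Import reals.
From mathcomp Require Import zify.
Set Implicit Arguments. Unset Strict Implicit. Unset Printing Implicit Defensive.
Import Order.TTheory GRing.Theory Num.Theory.

Lemma cgL p u v : chcong u v -> chcong (p ++ u) (p ++ v).
Proof.
elim=> [p0 q x y h| w | w1 w2 _ IH | w1 w2 w3 _ IH1 _ IH2].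
- by rewrite !catA -!(catA (p ++ p0)); apply: chcong_step.
- exact: chcong_refl.
- exact: chcong_sym.
- exact: chcong_trans IH1 IH2.
Qed.

Lemma cgR q u v : chcong u v -> chcong (u ++ q) (v ++ q).
Proof.
elim=> [p0 q0 x y h| w | w1 w2 _ IH | w1 w2 w3 _ IH1 _ IH2].
- by rewrite -!catA; apply: chcong_step.
- exact: chcong_refl.
- exact: chcong_sym.
- exact: chcong_trans IH1 IH2.
Qed.

#[export] Instance chcong_Equiv : Equivalence chcong.
Proof. split; [exact: chcong_refl | exact: chcong_sym | exact: chcong_trans]. Qed.

#[export] Instance cat_Proper : Proper (chcong ==> chcong ==> chcong) (@cat 'I_3).
Proof. move=> u u' hu v v' hv; apply: chcong_trans (cgR _ hu) (cgL _ hv). Qed.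

Definition la : 'I_3 := @Ordinal 3 0 isT.
Definition lb : 'I_3 := @Ordinal 3 1 isT.
Definition lc : 'I_3 := @Ordinal 3 2 isT.

Lemma mkrel (i j k : 'I_3) x y : (i <= j)%N -> (j <= k)%N ->
  (x = [:: j; k; i] \/ x = [:: k; j; i] \/ x = [:: k; i; j]) ->
  (y = [:: j; k; i] \/ y = [:: k; j; i] \/ y = [:: k; i; j]) -> chcong x y.
Proof.
move=> hij hjk hx hy.
have := @chcong_step [::] [::] x y; rewrite /= !cats0; apply.
by exists i, j, k.
Qed.

Lemma R1 : chcong [:: lc; lc; lb] [:: lc; lb; lc].
Proof. by apply: (@mkrel lb lc lc); auto. Qed.
Lemma R2 : chcong [:: lc; lb; lb] [:: lb; lc; lb].
Proof. by apply: (@mkrel lb lb lc); auto. Qed.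
Lemma R3 : chcong [:: lc; la; lb] [:: lb; lc; la].
Proof. by apply: (@mkrel la lb lc); auto. Qed.
Lemma R4 : chcong [:: lc; lc; la] [:: lc; la; lc].
Proof. by apply: (@mkrel la lc lc); auto. Qed.
Lemma R5 : chcong [:: lc; lb; la] [:: lb; lc; la].
Proof. by apply: (@mkrel la lb lc); auto. Qed.
Lemma R6 : chcong [:: lc; la; la] [:: la; lc; la].
Proof. by apply: (@mkrel la la lc); auto. Qed.
Lemma R7 : chcong [:: lb; lb; la] [:: lb; la; lb].
Proof. by apply: (@mkrel la lb lb); auto. Qed.
Lemma R8 : chcong [:: lb; la; la] [:: la; lb; la].
Proof. by apply: (@mkrel la la lb); auto. Qed.
Lemma R9 : chcong [:: lc; lb; lc; la] [:: lc; la; lc; lb].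
Proof.
have -> : [:: lc; lb; lc; la] = [:: lc] ++ [:: lb; lc; la] by [].
rewrite -R3.
have -> : [:: lc] ++ [:: lc; la; lb] = [:: lc; lc; la] ++ [:: lb] by [].
by rewrite R4; reflexivity.
Qed.

Fixpoint pw (n : nat) (x : word) : word := if n is n'.+1 then x ++ pw n' x else [::].

Lemma pwSr n x : pw n.+1 x = pw n x ++ x.
Proof.
suff h : pw n x ++ x = x ++ pw n x by rewrite h.
elim: n => [|n IH]; first by rewrite /= cats0.
by rewrite [pw n.+1 x]/= -catA IH.
Qed.

Lemma comm_pw n x y : chcong (x ++ y) (y ++ x) -> chcong (pw n x ++ y) (y ++ pw n x).
Proof.
move=> h; elim: n => [|n IH] /=; first by rewrite cats0; reflexivity.
by rewrite -catA IH catA h -catA; reflexivity.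
Qed.

Record st := St { sp : nat; sq : nat; sr : nat; ss : nat; su : nat; sv : nat }.

Definition stair (e : st) : word :=
  pw (sp e) [:: la] ++ pw (sq e) [:: lb; la] ++ pw (sr e) [:: lb] ++
  pw (ss e) [:: lc; la] ++ pw (su e) [:: lc; lb] ++ pw (sv e) [:: lc].

Definition rm (g : 'I_3) (e : st) : st :=
  let: St p q r s u v := e in
  match nat_of_ord g with
  | 2 => St p q r s u v.+1
  | 1 => if v is v'.+1 then St p q r s u.+1 v' else St p q r.+1 s u v
  | _ => if v is v'.+1 then St p q r s.+1 u v'
         else if u is u'.+1 then St p q r.+1 s.+1 u' v
         else if r is r'.+1 then St p q.+1 r' s u v
         else St p.+1 q r s u v
  end.

Lemma pw0 x : pw 0 x = [::]. Proof. by []. Qed.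

Ltac norm := rewrite /stair; cbn -[pw]; rewrite ?pw0 ?pwSr ?cat0s -?catA ?cats0 ?cat0s.

Lemma comm_pwz n x y z : chcong (x ++ y) (y ++ x) ->
  chcong (pw n x ++ y ++ z) (y ++ pw n x ++ z).
Proof. by move=> h; rewrite !catA (comm_pw n h); reflexivity. Qed.

Lemma stair_rm g e : chcong (stair e ++ [:: g]) (stair (rm g e)).
Proof.
case: e => p q r s u v.
case: g => [[|[|[|?]]] i] //.
- have -> : Ordinal i = la by exact: val_inj.
  case: v => [|v]; [case: u => [|u]; [case: r => [|r]|] |]; norm.
  + rewrite (comm_pw s (x:=[:: lc; la]) (y:=[:: la]) R6).
    rewrite (comm_pwz q (x:=[:: lb; la]) (y:=[:: la]) _ R8); reflexivity.
  + rewrite (comm_pw s (x:=[:: lc; la]) (y:=[:: la]) R6).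
    rewrite (comm_pwz r (x:=[:: lb]) (y:=[:: lb; la]) _ R7); reflexivity.
  + rewrite (R5 : chcong ([:: lc; lb] ++ [:: la]) ([:: lb] ++ [:: lc; la])).
    rewrite (comm_pwz u (x:=[:: lc; lb]) (y:=[:: lb]) _ R2).
    rewrite (comm_pw u (x:=[:: lc; lb]) (y:=[:: lc; la]) R9).
    rewrite (comm_pwz s (x:=[:: lc; la]) (y:=[:: lb]) _ R3); reflexivity.
  + rewrite (comm_pw v (x:=[:: lc]) (y:=[:: lc; la]) R4).
    rewrite (comm_pwz u (x:=[:: lc; lb]) (y:=[:: lc; la]) _ R9); reflexivity.
- have -> : Ordinal i = lb by exact: val_inj.
  case: v => [|v]; norm.
  + rewrite (comm_pw u (x:=[:: lc; lb]) (y:=[:: lb]) R2).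
    rewrite (comm_pwz s (x:=[:: lc; la]) (y:=[:: lb]) _ R3); reflexivity.
  + rewrite (comm_pw v (x:=[:: lc]) (y:=[:: lc; lb]) R1); reflexivity.
- have -> : Ordinal i = lc by exact: val_inj.
  norm; reflexivity.
Qed.

Local Open Scope ring_scope.

Definition tri := (int * int * int)%type.
Definition tm (a b : tri) : tri :=
  (a.1.1 + b.1.1, Num.max (a.1.1 + b.1.2) (a.1.2 + b.2), a.2 + b.2).

Definition gtri (r g : 'I_3) : tri :=
  match nat_of_ord r, nat_of_ord g with
  | 0, 0 => (1%:Z, 0%:Z, 0%:Z)
  | 0, _ => (0%:Z, 0%:Z, 1%:Z)
  | 1, 2 => (0%:Z, 0%:Z, 1%:Z)
  | 1, _ => (1%:Z, 0%:Z, 0%:Z)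
  | _, 0 => (1%:Z, 1%:Z, 0%:Z)
  | _, 1 => (0%:Z, 0%:Z, 0%:Z)
  | _, _ => (0%:Z, 1%:Z, 1%:Z)
  end.

Definition idt (r : 'I_3) : tri :=
  match nat_of_ord r with 0 | 1 => (0%:Z, -1, 0%:Z) | _ => (0%:Z, 0%:Z, 0%:Z) end.

Definition triw (r : 'I_3) (w : word) : tri :=
  foldr (fun g acc => tm (gtri r g) acc) (idt r) w.

Definition valid (r : 'I_3) (a : tri) : bool :=
  if (nat_of_ord r <= 1)%N then (a.1.1 - 1 <= a.1.2) && (a.2 - 1 <= a.1.2)
  else (a.1.1 <= a.1.2) && (a.2 <= a.1.2).

Lemma tmA a b c : tm a (tm b c) = tm (tm a b) c.
Proof.
case: a => [[x1 y1] t1]; case: b => [[x2 y2] t2]; case: c => [[x3 y3] t3].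
rewrite /tm /=; congr (_, _, _); lia.
Qed.

Lemma valid_gen r g : valid r (gtri r g).
Proof. by case: r => [[|[|[|?]]] ?] //; case: g => [[|[|[|?]]] ?]. Qed.

Lemma valid_tm r a b : valid r a -> valid r b -> valid r (tm a b).
Proof.
case: a => [[x1 y1] t1]; case: b => [[x2 y2] t2].
rewrite /valid /tm /=; case: ifP => _ /andP[? ?] /andP[? ?]; apply/andP; split; lia.
Qed.

Lemma valid_idt r : valid r (idt r).
Proof. by case: r => [[|[|[|?]]] ?]. Qed.

Lemma valid_triw r w : valid r (triw r w).
Proof. elim: w => [|g w IH] /=; [exact: valid_idt | exact: valid_tm (valid_gen _ _) IH]. Qed.

Lemma tm_idl r a : valid r a -> tm (idt r) a = a.
Proof.
case: a => [[x y] t]; case: r => [[|[|[|?]]] ?] //=;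
rewrite /valid /tm /= => /andP[? ?]; congr (_, _, _); lia.
Qed.

Lemma tm_idr r a : valid r a -> tm a (idt r) = a.
Proof.
case: a => [[x y] t]; case: r => [[|[|[|?]]] ?] //=;
rewrite /valid /tm /= => /andP[? ?]; congr (_, _, _); lia.
Qed.

Lemma triw_cat r u v : triw r (u ++ v) = tm (triw r u) (triw r v).
Proof.
elim: u => [|g u IH] /=; first by rewrite tm_idl // valid_triw.
by rewrite IH tmA.
Qed.

Lemma triw1 r g : triw r [:: g] = gtri r g.
Proof. by rewrite /= tm_idr // valid_gen. Qed.

Lemma rel_triw (i j k r : 'I_3) : (i <= j)%N -> (j <= k)%N ->
  triw r [:: j; k; i] = triw r [:: k; j; i] /\ triw r [:: k; i; j] = triw r [:: k; j; i].
Proof.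
case: r => [[|[|[|?]]] ?] //; case: i => [[|[|[|?]]] ?] //; case: j => [[|[|[|?]]] ?] //;
case: k => [[|[|[|?]]] ?] //= _ _; rewrite /tm /=; split; congr (_, _, _); lia.
Qed.

Section Emb.
Variable R : realType.

Definition emb (a : tri) : tmx R :=
  mx2 (Some a.1.1%:~R) (Some a.1.2%:~R) None (Some a.2%:~R).

Lemma max_intr (a b : int) : ((Num.max a b)%:~R : R) = Num.max a%:~R b%:~R.
Proof.
case: (lerP a b) => h.
  by rewrite !max_r // ler_int.
by rewrite !max_l // ler_int ltW.
Qed.

Lemma tmxmul_emb a b : tmxmul (emb a) (emb b) = emb (tm a b).
Proof.
case: a => [[x1 y1] t1]; case: b => [[x2 y2] t2].
apply/matrixP => i j; rewrite /tmxmul /emb /mx2 /tm !mxE /=.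
case: i => [[|[|?]] ?] //=; case: j => [[|[|?]] ?] //=.
- by rewrite intrD.
- by rewrite max_intr !intrD.
- by rewrite intrD.
Qed.

Lemma emb_inj a b : emb a = emb b -> a = b.
Proof.
case: a => [[x1 y1] t1]; case: b => [[x2 y2] t2] /matrixP h.
have h00 := h ord0 ord0; have h01 := h ord0 ord_max; have h11 := h ord_max ord_max.
rewrite /emb /mx2 !mxE /= in h00 h01 h11.
by case: h00 => /intr_inj ->; case: h01 => /intr_inj ->; case: h11 => /intr_inj ->.
Qed.

Lemma genmx_emb (r g : 'I_3) : Defs.genmx R r g = emb (gtri r g).
Proof.
by case: r => [[|[|[|?]]] ?] //; case: g => [[|[|[|?]]] ?] //;
  rewrite /emb /T0 /T1 /Tinf /= ?rmorph0 ?rmorph1.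
Qed.

Lemma idmx_emb (r : 'I_3) : idmx R r = emb (idt r).
Proof.
by case: r => [[|[|[|?]]] ?] //; rewrite /emb /T0 /Tm1 /Tinf /= ?rmorph0 ?rmorphN1.
Qed.

Lemma rho_r_emb (r : 'I_3) (w : word) : rho_r R r w = emb (triw r w).
Proof.
case: w => [|g w] /=; first exact: idmx_emb.
elim: w g => [|h w IH] g /=.
  by rewrite tm_idr ?valid_gen // genmx_emb.
by rewrite IH genmx_emb tmxmul_emb.
Qed.

End Emb.

Definition e0 := St 0 0 0 0 0 0.
Definition nf (w : word) : st := foldl (fun e g => rm g e) e0 w.

Lemma nf_cong w : chcong w (stair (nf w)).
Proof.
elim/last_ind: w => [|w g IH]; first by reflexivity.
rewrite /nf foldl_rcons -/(nf w) -cats1; exact: chcong_trans (cgR _ IH) (stair_rm _ _).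
Qed.

Definition F (r : 'I_3) (e : st) : tri :=
  let: St p q r' s u v := e in
  let A := (p + q + s)%:Z in let B := (q + r' + u)%:Z in let C := (s + u + v)%:Z in
  let M1 := (p + q + r' + s + 2 * u + v)%:Z in
  let M2 := (p + 2 * q + r' + s + u + v)%:Z in
  let M3 := (p + q + s + u + v)%:Z in
  match nat_of_ord r with
  | 0 => (A, M1 - 1, B + C)
  | 1 => (A + B, M2 - 1, C)
  | _ => (A, M3, C)
  end.

Lemma Frm r g e : F r (rm g e) = tm (F r e) (gtri r g).
Proof.
case: e => p q r' s u v.
case: r => [[|[|[|?]]] ?] //; case: g => [[|[|[|?]]] ?] //;
  rewrite /rm /=; try (case: v => [|v]; [case: u => [|u]; [case: r' => [|r']|]|]);
  rewrite /tm /=; congr (_, _, _); lia.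
Qed.

Lemma triw_nf r w : triw r w = F r (nf w).
Proof.
elim/last_ind: w => [|w g IH].
  by case: r => [[|[|[|?]]] ?] //.
by rewrite /nf foldl_rcons -/(nf w) -cats1 triw_cat IH triw1 Frm.
Qed.

Lemma F_inj e e' : F 0 e = F 0 e' -> F 1 e = F 1 e' -> F 2 e = F 2 e' -> e = e'.
Proof.
case: e => p q r s u v; case: e' => p' q' r' s' u' v' /=.
case=> h1 h2 h3 [h4 h5 h6] [h7 h8 h9].
have ? : p = p' by lia. have ? : q = q' by lia. have ? : r = r' by lia.
have ? : s = s' by lia. have ? : u = u' by lia. have ? : v = v' by lia.
by subst.
Qed.

Lemma cong_triw r u v : chcong u v -> triw r u = triw r v.
Proof.
elim=> [p q x y h | w | w1 w2 _ IH | w1 w2 w3 _ IH1 _ IH2] //.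
- rewrite !triw_cat; congr (tm _ (tm _ _)).
  case: h => i [j [k [hij [hjk [hx hy]]]]].
  have [e1 e3] := rel_triw r hij hjk.
  by case: hx => [->|[->|->]]; case: hy => [->|[->|->]]; rewrite ?e1 ?e3.
- by rewrite IH1.
Qed.

Theorem lemmaA1 (R : realType) :
  (forall u v : word, chcong u v -> rho R u = rho R v) /\
  (forall w : word, tmx3mul (rho R [::]) (rho R w) = rho R w /\
                    tmx3mul (rho R w) (rho R [::]) = rho R w) /\
  (forall u v : word, rho R (u ++ v) = tmx3mul (rho R u) (rho R v)) /\
  (forall u v : word, rho R u = rho R v -> chcong u v).
Proof.
have hom : forall u v : word, rho R (u ++ v) = tmx3mul (rho R u) (rho R v).
  move=> u v; by rewrite /rho /tmx3mul /= !rho_r_emb !triw_cat !tmxmul_emb.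
split.
  move=> u v h; by rewrite /rho !rho_r_emb !(cong_triw _ h).
split.
  by move=> w; rewrite -!hom cats0.
split; first exact: hom.
move=> u v; rewrite /rho !rho_r_emb => -[/emb_inj h0 /emb_inj h1 /emb_inj h2].
rewrite !triw_nf in h0 h1 h2.
have e := F_inj h0 h1 h2.
apply: chcong_trans (nf_cong u) _; rewrite e; apply: chcong_sym; exact: nf_cong.
Qed.
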